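(* If $w\in\mathbb{R}^n$, $w\ge0$, is strongly bilevel feasible, then $w$ has exactly one bilevel feasible decomposition.
   Context: Multi-commodity network pricing setting: $G=(\mathcal{V},\mathcal{A})$ directed graph with arc costs $c\ge0$, nonempty tolled arc set $\mathcal{A}_1\subsetneq\mathcal{A}$, $n=|\mathcal{A}_1|$, $N$ node–arc incidence matrix; finite set $\mathcal{K}$ of commodities, commodity $k$ having origin $o^k$ and destination $d^k$ connected by a path of arcs not in $\mathcal{A}_1$; $b^k_{o^k}=1$, $b^k_{d^k}=-1$, other entries $0$; $\mathcal{X}^k=\{x\in\mathbb{R}^{\mathcal{A}}: Nx=b^k,\ x\ge0\}$; $x_{\mathcal{A}_1}$ is the restriction of $x$ to $\mathcal{A}_1$. For $t\in\mathbb{R}^n$ let $f^k(t)=\min\{c^\top x+t^\top x_{\mathcal{A}_1}: x\in\mathcal{X}^k\}$ if $t\ge0$, $-\infty$ otherwise; $f=\sum_k f^k$; $g^k(w)=\sup_t\{f^k(t)-t^\top w\}$, $g(w)=\sup_t\{f(t)-t^\top w\}$. A vector $w\ge0$ is strongly bilevel feasible if $\{w\}$ is the projection onto $w$-space of a face of $\operatorname{epi}(g)$ whose affine hull's direction space does not contain $(0,1)$ (equivalently $\{(w,g(w))\}$ is a face of $\operatorname{epi}(g)$). A decomposition of $w$ is a tuple $(w^k)_{k\in\mathcal{K}}$ of vectors $w^k\ge0$ with $\sum_k w^k=w$; it is bilevel feasible if $g(w)=\sum_k g^k(w^k)$. *)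

(* Defs.v *)
From HB Require Import structures.
From mathcomp Require Import all_boot all_order all_algebra.
From mathcomp Require Import boolp classical_sets reals constructive_ereal ereal.

Set Implicit Arguments. Unset Strict Implicit. Unset Printing Implicit Defensive.
Import Order.TTheory GRing.Theory Num.Theory.
Local Open Scope ring_scope.
Local Open Scope classical_set_scope.

Section Pricing.
Variable R : realType.
Variables (V A : finType) (tl hd : A -> V).

Fixpoint walk (u v : V) (p : seq A) : bool :=
  if p is a :: p' then (tl a == u) && walk (hd a) v p' else u == v.

Definition incid (v : V) (a : A) : R := (tl a == v)%:R - (hd a == v)%:R.

Definition bvec (o d : V) (v : V) : R := (v == o)%:R - (v == d)%:R.

Definition Xset (o d : V) : set (A -> R) :=
  [set x | (forall v, \sum_(a : A) incid v a * x a = bvec o d v) /\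
           (forall a, 0 <= x a)].

Variable A1 : {set A}.
(* index type of the tolled arcs: R^n is modelled as tolled -> R, n = #|A1| *)
Definition tolled := {a : A | a \in A1}.

Definition tdot (t : tolled -> R) (x : A -> R) : R := \sum_(i : tolled) t i * x (val i).
Definition vdot (t w : tolled -> R) : R := \sum_(i : tolled) t i * w i.

Variable c : A -> R.

Definition fk (o d : V) (t : tolled -> R) : \bar R :=
  if [forall i, 0 <= t i]
  then ereal_inf [set ((\sum_(a : A) c a * x a) + tdot t x)%:E | x in Xset o d]
  else -oo%E.

Definition gk (o d : V) (w : tolled -> R) : \bar R :=
  ereal_sup [set (fk o d t - (vdot t w)%:E)%E | t in [set: tolled -> R]].

Variables (K : finType) (o d : K -> V).

Definition ftot (t : tolled -> R) : \bar R := (\sum_(k : K) fk (o k) (d k) t)%E.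

Definition gtot (w : tolled -> R) : \bar R :=
  ereal_sup [set (ftot t - (vdot t w)%:E)%E | t in [set: tolled -> R]].

Definition point := ((tolled -> R) * R)%type.

Definition epi_g : set point := [set p | (gtot p.1 <= p.2%:E)%E].

Definition cvx (l : R) (p q : point) : point :=
  (fun j => l * p.1 j + (1 - l) * q.1 j, l * p.2 + (1 - l) * q.2).

Definition is_face (C F : set point) : Prop :=
  F `<=` C /\
  (forall p q l, F p -> F q -> 0 <= l <= 1 -> F (cvx l p q)) /\
  (forall p q l, C p -> C q -> 0 < l < 1 -> F (cvx l p q) -> F p /\ F q).

(* v lies in the direction space of aff(F), i.e. in span { p - q : p, q in F } *)
Definition in_dir_space (F : set point) (v : point) : Prop :=
  exists (m : nat) (lam : 'I_m -> R) (p q : 'I_m -> point),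
    (forall i, F (p i) /\ F (q i)) /\
    (forall j, v.1 j = \sum_(i < m) lam i * ((p i).1 j - (q i).1 j)) /\
    v.2 = \sum_(i < m) lam i * ((p i).2 - (q i).2).

Definition e_vert : point := (fun _ => 0, 1).

Definition strongly_bilevel_feasible (w : tolled -> R) : Prop :=
  exists F : set point,
    is_face epi_g F /\
    (exists p, F p) /\ (forall p, F p -> p.1 = w) /\
    ~ in_dir_space F e_vert.

Definition bilevel_feasible_decomposition (w : tolled -> R) (W : K -> tolled -> R) : Prop :=
  (forall k i, 0 <= W k i) /\
  (forall i, \sum_(k : K) W k i = w i) /\
  gtot w = (\sum_(k : K) gk (o k) (d k) (W k))%E.

End Pricing.

(* Main.v *)
Require Import Defs.
From HB Require Import structures.
From mathcomp Require Import all_boot all_order all_algebra.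
From mathcomp Require Import boolp classical_sets reals constructive_ereal ereal.
From Stdlib Require List.
From mathcomp Require Import ring lra.
Import Order.TTheory GRing.Theory Num.Theory.
Local Open Scope ring_scope.
Set Implicit Arguments. Unset Strict Implicit. Unset Printing Implicit Defensive.

Section Sep.
Variable R : realFieldType.
Lemma sep_lists (X Y : Type) (fl : X -> R) (fu : Y -> R) (Ls : seq X) (Us : seq Y) :
  (forall l u, List.In l Ls -> List.In u Us -> fl l <= fu u) ->
  exists v, (forall l, List.In l Ls -> fl l <= v) /\ (forall u, List.In u Us -> v <= fu u).
Proof.
elim: Ls => [|l Ls IH] H.
  elim: Us {H} => [|u Us [v [_ Hv]]]; first by exists 0.
  exists (Num.min (fu u) v); split => // u' /= [<-|Hu'].
    by rewrite ge_min lexx.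
  by rewrite ge_min (Hv _ Hu') orbT.
have [v [H1 H2]] : exists v, (forall l, List.In l Ls -> fl l <= v) /\ (forall u, List.In u Us -> v <= fu u).
  by apply: IH => l' u Hl Hu; apply: H => //; right.
exists (Num.max (fl l) v); split.
  move=> l' /= [<-|Hl]; first by rewrite le_max lexx.
  by rewrite le_max (H1 _ Hl) orbT.
move=> u Hu; rewrite ge_max (H2 _ Hu) andbT; apply: H => //; by left.
Qed.
End Sep.

Section ListIn.
Variable T : Type.
Lemma In_filter (p : pred T) x s : List.In x (seq.filter p s) <-> List.In x s /\ p x.
Proof.
elim: s => [|y s IH] /=; first by split => // [[]].
case: ifP => Hy /=; split.
- case => [<-|H]; first by split; [left|].
  by have [? ?] := proj1 IH H; split; [right|].
- by case => [[<-|Hx] Hp]; [left|right; apply/IH].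
- by move/IH => [? ?]; split => //; right.
- by case => [[<-|Hx] Hp]; [rewrite Hp in Hy|apply/IH].
Qed.

Lemma In_cat x (s t : seq T) : List.In x (s ++ t) <-> List.In x s \/ List.In x t.
Proof.
elim: s => [|y s IH] /=; first by split; [right|case].
split; first by case => [<-|H]; [left; left| case: (proj1 IH H); tauto].
by case => [[<-|H]|H]; [left|right; apply/IH; left|right; apply/IH; right].
Qed.
Lemma In_allpairs (U W : Type) (f : U -> W -> T) s t x :
  List.In x [seq f a b | a <- s, b <- t] <->
  exists a b, [/\ List.In a s, List.In b t & x = f a b].
Proof.
elim: s => [|a s IH] /=; first by split => // [[a [b [[]]]]].
rewrite In_cat; split.
- case => [H|H']; last have [a' [b [H1 H2 ->]]] := proj1 IH H'.
    have [b [Hb ->]] : exists b, List.In b t /\ x = f a b.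
      elim: t H {IH} => [|b t IHt] //= [<-|H]; first by exists b; split => //; left.
      by have [b' [? ?]] := IHt H; exists b'; split => //; right.
    by exists a, b; split => //; left.
  by exists a', b; split => //; right.
- case => [a' [b [[Ea|Ha] Hb Ex]]]; last by right; apply: (proj2 IH); exists a', b.
  left; subst; elim: t Hb {IH} => [|b' t IHt] //= [<-|H]; [left|right; apply: IHt].
  done. done.
Qed.
End ListIn.

Section FM.
Variables (R : realFieldType) (I : finType).
Definition cstr := ((I -> R) * R)%type.
Definition satc (y : I -> R) (c : cstr) := \sum_i c.1 i * y i <= c.2.

Inductive derivc (S : seq cstr) : (I -> R) -> R -> Prop :=
| dIn c : List.In c S -> derivc S c.1 c.2
| dZero : derivc S (fun _ => 0) 0
| dAdd a b a' b' : derivc S a b -> derivc S a' b' ->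
    derivc S (fun i => a i + a' i) (b + b')
| dScale r a b : 0 <= r -> derivc S a b -> derivc S (fun i => r * a i) (r * b).

Lemma deriv_mono S S' : (forall c, List.In c S' -> derivc S c.1 c.2) ->
  forall a b, derivc S' a b -> derivc S a b.
Proof.
move=> H a b; elim => {a b}.
- by move=> c /H.
- exact: dZero.
- by move=> a b a' b' _ H1 _ H2; apply: dAdd.
- by move=> r a b Hr _ H1; apply: dScale.
Qed.

Definition comb (m : I) (p q : cstr) : cstr :=
  (fun i => - q.1 m * p.1 i + p.1 m * q.1 i, - q.1 m * p.2 + p.1 m * q.2).

Lemma fm_aux n : forall (s : {set I}) (S : seq cstr), #|s| = n ->
  (forall c i, List.In c S -> i \notin s -> c.1 i = 0) ->
  ~ (exists y, forall c, List.In c S -> satc y c) ->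
  exists2 b, b < 0 & derivc S (fun _ => 0) b.
Proof.
elim: n => [|n IHn] s S Hs Hsupp Hinf.
  have s0 : s = finset.set0 by apply/eqP; rewrite -cards_eq0 Hs.
  have [c Hc Hb] : exists2 c, List.In c S & c.2 < 0.
    apply: contrapT => Hn; apply: Hinf; exists (fun _ => 0) => c Hc.
    rewrite /satc big1 => [|i _]; last by rewrite mulr0.
    case: (lerP 0 c.2) => // Hlt; exfalso; apply: Hn; by exists c.
  exists c.2 => //.
  have -> : (fun _ : I => 0 : R) = c.1.
    by apply: funext => i; rewrite (Hsupp c i Hc) // s0 inE.
  exact: dIn.
have [m Hm] : exists m, m \in s.
  by apply/set0Pn; rewrite -card_gt0 Hs.
pose s' := s :\ m.
have Hs' : #|s'| = n by move: Hs; rewrite (cardsD1 m s) Hm add1n => -[].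
pose P := seq.filter (fun c : cstr => 0 < c.1 m) S.
pose N := seq.filter (fun c : cstr => c.1 m < 0) S.
pose Z := seq.filter (fun c : cstr => c.1 m == 0) S.
pose S' := Z ++ [seq comb m p q | p <- P, q <- N].
have HS' : forall c, List.In c S' -> derivc S c.1 c.2.
  move=> c; rewrite In_cat => -[/In_filter [Hc _]|/In_allpairs [p [q [Hp Hq ->]]]].
    exact: dIn.
  move: Hp Hq => /In_filter [Hp Hp0] /In_filter [Hq Hq0].
  apply: dAdd; apply: dScale; try exact: dIn.
    by rewrite oppr_ge0 ltW.
  exact: ltW.
have [b Hb HD] : exists2 b, b < 0 & derivc S' (fun _ => 0) b.
  apply: (IHn s' S' Hs').
    move=> c i; rewrite In_cat => -[/In_filter [Hc Hc0]|/In_allpairs [p [q [Hp Hq ->]]]].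
      rewrite /s' in_setD1 negb_and negbK => /orP [/eqP ->|Hi]; first exact/eqP.
      exact: Hsupp.
    move: Hp Hq => /In_filter [Hp Hp0] /In_filter [Hq Hq0] /=.
    rewrite /s' in_setD1 negb_and negbK => /orP [/eqP ->|Hi]; first by rewrite /comb /=; lra.
    by rewrite (Hsupp p i Hp Hi) (Hsupp q i Hq Hi) !mulr0 addr0.
  move=> [y' Hy']; apply: Hinf.
  pose rest (c : cstr) := \sum_(i | i != m) c.1 i * y' i.
  have Hsum : forall (c : cstr) v, \sum_i c.1 i * (if i == m then v else y' i) = c.1 m * v + rest c.
    move=> c v; rewrite (bigD1 m) //= eqxx; congr (_ + _).
    by apply: eq_bigr => i /negbTE ->.
  have Hsum' : forall c : cstr, \sum_i c.1 i * y' i = c.1 m * y' m + rest c.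
    by move=> c; rewrite (bigD1 m) //=.
  pose U (p : cstr) := (p.2 - rest p) / p.1 m.
  pose L (q : cstr) := (q.2 - rest q) / q.1 m.
  have Hsep : forall q p, List.In q N -> List.In p P -> L q <= U p.
    move=> q p /In_filter [Hq Hq0] /In_filter [Hp Hp0].
    have Hc : List.In (comb m p q) S'.
      apply/In_cat; right; apply/In_allpairs; exists p, q; split => //; apply/In_filter; split => //.
    have := Hy' _ Hc; rewrite /satc /comb /=.
    under eq_bigr do rewrite mulrDl -!mulrA.
    rewrite big_split /= -!mulr_sumr !Hsum' /U /L.
    set A := p.2 - rest p; set B := q.2 - rest q.
    have -> : p.2 = A + rest p by rewrite /A subrK.
    have -> : q.2 = B + rest q by rewrite /B subrK.
    move: Hp0 Hq0; set a := p.1 m; set b := q.1 m => Ha Hb Hle.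
    have HA : A = (A / a) * a by rewrite mulfVK // gt_eqF.
    have HB : B = (B / b) * b by rewrite mulfVK // lt_eqF.
    move: Hle; rewrite {1}HA {1}HB; set u := A / a; set l := B / b => Hle.
    have Hab : 0 < a * (- b) by rewrite mulr_gt0 // oppr_gt0.
    rewrite -subr_ge0; rewrite -(pmulr_rge0 _ Hab); nra.
  have [v [Hv1 Hv2]] := sep_lists Hsep.
  exists (fun i => if i == m then v else y' i) => c Hc.
  rewrite /satc Hsum.
  case: (ltgtP (c.1 m) 0) => Hc0.
  - have Hv := Hv1 c (proj2 (In_filter _ _ _) (conj Hc Hc0)).
    move: Hv; rewrite /L ler_ndivrMr // => Hv; lra.
  - have Hv := Hv2 c (proj2 (In_filter _ _ _) (conj Hc Hc0)).
    move: Hv; rewrite /U ler_pdivlMr // => Hv; lra.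
  - have HZ : List.In c S' by apply/In_cat; left; apply/In_filter; split => //; apply/eqP.
    have := Hy' c HZ; rewrite /satc Hsum' Hc0 !mul0r; done.
exists b => //.
exact: (deriv_mono HS').
Qed.
End FM.

Lemma farkas (R : realFieldType) (I : finType) (S : seq (cstr R I)) :
  ~ (exists y, forall c, List.In c S -> satc y c) ->
  exists2 b, b < 0 & derivc S (fun _ => 0) b.
Proof.
move=> H; apply: (@fm_aux R I _ [set: I] S erefl) => //.
by move=> c i _; rewrite finset.in_setT.
Qed.

Lemma sum_delta (R : realType) (J : finType) (j0 : J) (F : J -> R) :
  \sum_j (j == j0)%:R * F j = F j0.
Proof.
rewrite (bigD1 j0) //= eqxx mul1r big1 ?addr0 // => j /negbTE ->; by rewrite mul0r.
Qed.

Lemma In_mem (T : eqType) (x : T) (s : seq T) : x \in s -> List.In x s.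
Proof. elim: s => [|y s IH] //=; rewrite inE => /orP [/eqP ->|/IH]; [by left|by right]. Qed.

Lemma In_map' (T U : Type) (f : T -> U) x s : List.In x s -> List.In (f x) (map f s).
Proof. elim: s => [|y s IH] //= [->|/IH]; [by left|by right]. Qed.

Section Main.
Variables (R : realType) (V A : finType) (tl hd : A -> V) (A1 : {set A}) (c : A -> R)
  (K : finType) (o d : K -> V).
Local Notation tol := (tolled A1).
Local Notation I := (K * A)%type.

Definition rowE (k : K) (v : V) : cstr R I :=
  (fun ka => (ka.1 == k)%:R * incid R tl hd v ka.2, bvec R (o k) (d k) v).
Definition rowEn (k : K) (v : V) : cstr R I :=
  (fun ka => - ((ka.1 == k)%:R * incid R tl hd v ka.2), - bvec R (o k) (d k) v).
Definition rowN (k : K) (a : A) : cstr R I := (fun ka => - (ka == (k, a))%:R, 0).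
Definition rowC (w : tol -> R) (i : tol) : cstr R I := (fun ka => (ka.2 == val i)%:R, w i).
Definition rowO (g : R) : cstr R I := (fun ka => c ka.2, g).
Definition sys (w : tol -> R) (g : R) : seq (cstr R I) :=
  [seq rowE k v | k <- enum K, v <- enum V] ++ [seq rowEn k v | k <- enum K, v <- enum V] ++
  [seq rowN k a | k <- enum K, a <- enum A] ++ [seq rowC w i | i <- index_enum tol] ++ [:: rowO g].

Lemma In_sys (w : tol -> R) (g : R) cc : List.In cc (sys w g) ->
  (exists k v, cc = rowE k v) \/ (exists k v, cc = rowEn k v) \/ (exists k a, cc = rowN k a) \/
      (exists i, cc = rowC w i) \/ cc = rowO g.
Proof.
rewrite /sys !In_cat => -[|[|[|[]]]].
- by move/In_allpairs => [k [v [_ _ ->]]]; left; exists k, v.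
- by move/In_allpairs => [k [v [_ _ ->]]]; right; left; exists k, v.
- by move/In_allpairs => [k [v [_ _ ->]]]; right; right; left; exists k, v.
- move=> H; right; right; right; left.
  elim: (index_enum tol) H => [|i s IH] //= [<-|/IH //]; by exists i.
- by case => // <-; right; right; right; right.
Qed.

Lemma tdot0 (x : A -> R) : tdot (fun _ : tol => 0) x = 0.
Proof. by rewrite /tdot big1 // => i _; rewrite mul0r. Qed.
Lemma tdotD (t t' : tol -> R) (x : A -> R) : tdot (fun i : tol => t i + t' i) x = tdot t x + tdot t' x.
Proof. by rewrite /tdot -big_split; apply: eq_bigr => i _; rewrite mulrDl. Qed.
Lemma tdotZ (r : R) (t : tol -> R) (x : A -> R) : tdot (fun i : tol => r * t i) x = r * tdot t x.
Proof. by rewrite /tdot mulr_sumr; apply: eq_bigr => i _; rewrite mulrA. Qed.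
Lemma vdot0 (x : tol -> R) : vdot (fun _ : tol => 0) x = 0.
Proof. by rewrite /vdot big1 // => i _; rewrite mul0r. Qed.
Lemma vdotD (t t' x : tol -> R) : vdot (fun i : tol => t i + t' i) x = vdot t x + vdot t' x.
Proof. by rewrite /vdot -big_split; apply: eq_bigr => i _; rewrite mulrDl. Qed.
Lemma vdotZ (r : R) (t x : tol -> R) : vdot (fun i : tol => r * t i) x = r * vdot t x.
Proof. by rewrite /vdot mulr_sumr; apply: eq_bigr => i _; rewrite mulrA. Qed.

Lemma deriv_inv (w : tol -> R) (g : R) a b : derivc (sys w g) a b ->
  exists (rho : K -> R) (tau : tol -> R) (th : R),
  [/\ (forall i, 0 <= tau i), 0 <= th, b = \sum_k rho k + vdot tau w + th * g &
   forall k x, Xset tl hd (o k) (d k) x ->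
     \sum_a0 a (k, a0) * x a0 <= rho k + tdot tau x + th * \sum_a0 c a0 * x a0].
Proof.
elim => {a b}.
- move=> cc /In_sys [[k [v ->]]|[[k [v ->]]|[[k [a ->]]|[[i ->]|->]]]] /=.
  + exists (fun k' => (k' == k)%:R * bvec R (o k) (d k) v), (fun _ => 0), 0; split => //.
    * by rewrite vdot0 sum_delta !mul0r !addr0.
    * move=> k' x [Hx _]; rewrite tdot0 mul0r !addr0 /=.
      under eq_bigr do rewrite -mulrA; rewrite -mulr_sumr Hx.
      by case: eqP => [->|_]; rewrite ?mul1r ?mul0r.
  + exists (fun k' => - ((k' == k)%:R * bvec R (o k) (d k) v)), (fun _ => 0), 0; split => //.
    * by rewrite vdot0 sumrN sum_delta !mul0r !addr0.
    * move=> k' x [Hx _]; rewrite tdot0 mul0r !addr0 /=.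
      under eq_bigr do rewrite mulNr -mulrA; rewrite sumrN -mulr_sumr Hx.
      by case: eqP => [->|_]; rewrite ?mul1r ?mul0r.
  + exists (fun _ => 0), (fun _ => 0), 0; split => //.
    * by rewrite vdot0 big1 // !mul0r !addr0.
    * move=> k' x [_ Hx]; rewrite tdot0 mul0r !addr0 /=.
      rewrite sumr_le0 // => a0 _; rewrite mulNr oppr_le0 mulr_ge0 //.
  + exists (fun _ => 0), (fun j => (j == i)%:R), 0; split => //.
    * by rewrite /vdot sum_delta big1 // mul0r addr0 add0r.
    * move=> k' x _; rewrite mul0r addr0 add0r /tdot (sum_delta i (fun j => x (val j))) /=.
      by rewrite sum_delta.
  + exists (fun _ => 0), (fun _ => 0), 1; split => //.
    * rewrite vdot0 big1 ?mul1r ?add0r ?addr0 //.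
    * by move=> k' x _; rewrite tdot0 mul1r !add0r.
- exists (fun _ => 0), (fun _ => 0), 0; split => //.
  + by rewrite vdot0 big1 // mul0r !addr0.
  + by move=> k x _; rewrite tdot0 mul0r big1 ?addr0 // => a0 _; rewrite mul0r.
- move=> a b a' b' _ [r [t [th [Ht Hth -> H]]]] _ [r' [t' [th' [Ht' Hth' -> H']]]].
  exists (fun k => r k + r' k), (fun i => t i + t' i), (th + th'); split.
  + by move=> i; rewrite addr_ge0.
  + by rewrite addr_ge0.
  + rewrite big_split vdotD /=; lra.
  + move=> k x Hx; rewrite /= tdotD.
    under eq_bigr do rewrite mulrDl; rewrite big_split /=.
    have := H k x Hx; have := H' k x Hx; lra.
- move=> r a b Hr _ [rr [t [th [Ht Hth -> H]]]].
  exists (fun k => r * rr k), (fun i => r * t i), (r * th); split.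
  + by move=> i; rewrite mulr_ge0.
  + by rewrite mulr_ge0.
  + rewrite -mulr_sumr vdotZ /=; lra.
  + move=> k x Hx; rewrite /= tdotZ.
    under eq_bigr do rewrite -mulrA; rewrite -mulr_sumr.
    have Hl := H k x Hx.
    rewrite -mulrA -!mulrDr; exact: ler_wpM2l.
Qed.

Lemma pairE (F : I -> R) : \sum_ka F ka = \sum_k \sum_a F (k, a).
Proof. by rewrite pair_bigA; apply: eq_bigr; case. Qed.

Lemma L1 (k : K) (F : A -> R) (G : I -> R) :
  \sum_ka ((ka.1 == k)%:R * F ka.2) * G ka = \sum_a F a * G (k, a).
Proof.
rewrite pairE /=.
under eq_bigr => k' _ do under eq_bigr => a0 _ do rewrite -mulrA.
under eq_bigr => k' _ do rewrite -mulr_sumr.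
by rewrite sum_delta.
Qed.
Lemma L1n (k : K) (F : A -> R) (G : I -> R) :
  \sum_ka (- ((ka.1 == k)%:R * F ka.2)) * G ka = - \sum_a F a * G (k, a).
Proof. by under eq_bigr do rewrite mulNr; rewrite sumrN L1. Qed.
Lemma L2 (p : I) (G : I -> R) : \sum_ka (- (ka == p)%:R) * G ka = - G p.
Proof. by under eq_bigr do rewrite mulNr; rewrite sumrN sum_delta. Qed.
Lemma L3 (a0 : A) (G : I -> R) : \sum_ka (ka.2 == a0)%:R * G ka = \sum_k G (k, a0).
Proof. by rewrite pairE; apply: eq_bigr => k _ /=; rewrite sum_delta. Qed.

Lemma sys_feas (w : tol -> R) (g : R) y : (forall cc, List.In cc (sys w g) -> satc y cc) ->
  [/\ (forall k, Xset tl hd (o k) (d k) (fun a => y (k, a))),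
      (forall i, \sum_k y (k, val i) <= w i) &
      \sum_k \sum_a c a * y (k, a) <= g].
Proof.
move=> H; split.
- move=> k; split.
  + move=> v; apply/le_anti/andP; split.
    * have := H (rowE k v); rewrite /satc /= L1; apply; apply/In_cat; left.
      by apply/In_allpairs; exists k, v; split => //; apply: In_mem; rewrite mem_enum.
    * have := H (rowEn k v); rewrite /satc /= L1n lerN2; apply.
      apply/In_cat; right; apply/In_cat; left.
      by apply/In_allpairs; exists k, v; split => //; apply: In_mem; rewrite mem_enum.
  + move=> a; have := H (rowN k a); rewrite /satc /= L2 oppr_le0; apply.
    do 2 (apply/In_cat; right); apply/In_cat; left.
    by apply/In_allpairs; exists k, a; split => //; apply: In_mem; rewrite mem_enum.
- move=> i; have := H (rowC w i); rewrite /satc /= L3; apply.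
  do 3 (apply/In_cat; right); apply/In_cat; left.
  by apply: In_map'; apply: In_mem; rewrite mem_index_enum.
- have := H (rowO g); rewrite /satc /= pairE; apply.
  by do 4 (apply/In_cat; right); left.
Qed.

Definition pflow (p : seq A) : A -> R := fun a => (count_mem a p)%:R.

Lemma pflow_X u v p : walk tl hd u v p -> Xset tl hd u v (pflow p).
Proof.
elim: p u => [|a0 p IH] u /=.
  move/eqP => <-; split => [v'|a]; last by rewrite /pflow /= ler0n.
  by rewrite /bvec subrr big1 // => a _; rewrite /pflow /= mulr0.
move=> /andP [/eqP Ht Hw]; have [H1 H2] := IH _ Hw; split => [v'|a]; last first.
  by rewrite /pflow ler0n.
have -> : \sum_a incid R tl hd v' a * pflow (a0 :: p) a =
   incid R tl hd v' a0 + \sum_a incid R tl hd v' a * pflow p a.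
  rewrite /pflow /=.
  under eq_bigr do rewrite natrD mulrDr.
  by rewrite big_split /= (eq_bigr (fun a => (a == a0)%:R * incid R tl hd v' a)) ?sum_delta //
     => a _; rewrite eq_sym mulrC.
rewrite H1 /incid /bvec Ht [hd a0 == _]eq_sym [u == _]eq_sym.
by rewrite addrA subrK.
Qed.

Lemma pflow_tdot (t : tol -> R) p : all (fun a => a \notin A1) p -> tdot t (pflow p) = 0.
Proof.
move=> Hp; rewrite /tdot big1 // => i _; rewrite /pflow.
suff -> : count_mem (val i) p = 0%N by rewrite mulr0.
apply/count_memPn/negP => Hi; have := allP Hp _ Hi; by rewrite /= (valP i).
Qed.

Lemma fk_lb k (t : tol -> R) (m : R) : (forall i, 0 <= t i) ->
  (forall x, Xset tl hd (o k) (d k) x -> m <= \sum_a c a * x a + tdot t x) ->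
  (m%:E <= fk tl hd c (o k) (d k) t)%E.
Proof.
move=> Ht H; rewrite /fk.
have -> : [forall i, 0 <= t i] by apply/forallP.
by apply/ereal_infP => _ [x Hx <-]; rewrite lee_fin; apply: H.
Qed.

Lemma gtot_ge (w t : tol -> R) : (ftot tl hd c o d t - (vdot t w)%:E <= gtot tl hd c o d w)%E.
Proof. by apply: ereal_sup_ubound; exists t. Qed.

Lemma exist_opt (w : tol -> R) (g : R)
  (hpath : forall k, exists p : seq A,
      walk tl hd (o k) (d k) p && all (fun a => a \notin A1) p)
  (hw : forall i, 0 <= w i) (Hg : gtot tl hd c o d w = g%:E) :
  exists y : K -> A -> R, [/\ (forall k, Xset tl hd (o k) (d k) (y k)),
      (forall i, \sum_k y k (val i) <= w i) &
      \sum_k \sum_a c a * y k a <= g].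
Proof.
case: (pselect (exists y, forall cc, List.In cc (sys w g) -> satc y cc)) => [[y Hy]|Hno].
  by have [H1 H2 H3] := sys_feas Hy; exists (fun k a => y (k, a)).
have [b Hb /deriv_inv [rho [tau [th [Htau Hth Eb Hin]]]]] := farkas Hno.
have Hin0 : forall k x, Xset tl hd (o k) (d k) x ->
    0 <= rho k + tdot tau x + th * \sum_a c a * x a.
  move=> k x Hx; have := Hin k x Hx; by rewrite big1 // => a0 _; rewrite mul0r.
have Hvw : 0 <= vdot tau w by apply: sumr_ge0 => i _; apply: mulr_ge0.
exfalso.
have [th0|thpos] := eqVneq th 0.
  have Hr : forall k, 0 <= rho k.
    move=> k; have [p /andP [Hp Hp1]] := hpath k.
    by have := Hin0 k _ (pflow_X Hp); rewrite pflow_tdot // th0 mul0r addr0 addr0.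
  have : 0 <= b by rewrite Eb th0 mul0r addr0 addr_ge0 // sumr_ge0.
  by rewrite leNgt Hb.
have th_gt0 : 0 < th by rewrite lt_neqAle eq_sym thpos Hth.
pose t := fun i => th^-1 * tau i.
have Ht : forall i, 0 <= t i by move=> i; rewrite mulr_ge0 // invr_ge0 ltW.
have Hfk : forall k, ((- (th^-1 * rho k))%:E <= fk tl hd c (o k) (d k) t)%E.
  move=> k; apply: fk_lb => // x Hx.
  have := Hin0 k x Hx => H0.
  have : 0 <= th^-1 * (rho k + tdot tau x + th * \sum_a c a * x a) by rewrite mulr_ge0 // invr_ge0 ltW.
  rewrite !mulrDr mulrA mulVf ?mul1r ?(gt_eqF th_gt0) // /t tdotZ; lra.
have Hf : ((\sum_k (- (th^-1 * rho k)))%:E <= ftot tl hd c o d t)%E.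
  by rewrite -sumEFin; apply: lee_sum => k _; apply: Hfk.
have := gtot_ge w t; rewrite Hg => H.
have : ((\sum_k (- (th^-1 * rho k)) - vdot t w)%:E <= g%:E)%E.
  apply: le_trans H; rewrite EFinB; exact: leeB.
rewrite lee_fin /t vdotZ sumrN -mulr_sumr => H2.
have : th^-1 * b < 0 by rewrite pmulr_rlt0 // invr_gt0.
rewrite Eb !mulrDr mulrA mulVf ?mul1r ?(gt_eqF th_gt0) //; lra.
Qed.

Local Open Scope ereal_scope.

Lemma fk0_ge0 (hc : forall a, (0 <= c a)%R) k : 0 <= fk tl hd c (o k) (d k) (fun _ : tol => 0%R).
Proof.
apply: fk_lb => // x [_ Hx]; rewrite tdot0 addr0.
by apply: sumr_ge0 => a _; apply: mulr_ge0.
Qed.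

Lemma gk_ge0 (hc : forall a, (0 <= c a)%R) k (W : tol -> R) : 0 <= gk tl hd c (o k) (d k) W.
Proof.
apply: le_trans (fk0_ge0 hc k) _.
have H : fk tl hd c (o k) (d k) (fun _ : tol => 0%R) - (vdot (fun _ : tol => 0%R) W)%:E
   <= gk tl hd c (o k) (d k) W by apply: ereal_sup_ubound; exists (fun _ : tol => 0%R).
by rewrite vdot0 sube0 in H.
Qed.

Lemma gtot_ge0 (hc : forall a, (0 <= c a)%R) (w : tol -> R) : 0 <= gtot tl hd c o d w.
Proof.
apply: le_trans (gtot_ge w (fun _ : tol => 0%R)); rewrite vdot0 sube0.
by apply: sume_ge0 => k _; apply: fk0_ge0.
Qed.

Lemma gtot_le_sum (w : tol -> R) (W : K -> tol -> R) :
  (forall i, (\sum_k W k i)%R = w i) ->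
  gtot tl hd c o d w <= \sum_k gk tl hd c (o k) (d k) (W k).
Proof.
move=> HW; apply/ereal_supP => _ [t _ <-].
have -> : vdot t w = (\sum_k vdot t (W k))%R.
  rewrite /vdot exchange_big /=; apply: eq_bigr => i _.
  by rewrite -HW mulr_sumr.
rewrite /ftot -EFinN -sumrN -sumEFin -big_split /=.
apply: lee_sum => k _; rewrite EFinN; apply: ereal_sup_ubound; by exists t.
Qed.

Lemma gk_le k (W : tol -> R) x : Xset tl hd (o k) (d k) x -> (forall i, (x (val i) <= W i)%R) ->
  gk tl hd c (o k) (d k) W <= (\sum_a c a * x a)%:E.
Proof.
move=> Hx HxW; apply/ereal_supP => _ [t _ <-]; rewrite /fk; case: ifP => Ht; last first.
  by rewrite /= leNye.
have Ht' : forall i, (0 <= t i)%R by apply/forallP.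
have H1 : ereal_inf [set ((\sum_a c a * x0 a) + tdot t x0)%:E | x0 in Xset tl hd (o k) (d k)]
     <= ((\sum_a c a * x a) + tdot t x)%:E.
  by apply: ereal_inf_lbound; exists x.
apply: le_trans (leeB H1 (lexx (vdot t W)%:E)) _.
rewrite -EFinB lee_fin lerBlDr lerD2l.
by apply: ler_sum => i _; apply: ler_wpM2l.
Qed.

End Main.

Local Close Scope ereal_scope.
Local Open Scope ring_scope.
Lemma half_in (R : realFieldType) : (0 : R) < 1/2 < (1 : R).
Proof. by apply/andP; split; lra. Qed.

Unset Implicit Arguments.

Theorem lemma7 (R : realType) (V A : finType) (tl hd : A -> V)
  (A1 : {set A}) (c : A -> R) (K : finType) (o d : K -> V)
  (hc : forall a, 0 <= c a)
  (hA1 : A1 != finset.set0) (hA1p : A1 != [set: A])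
  (hod : forall k, o k != d k)
  (hpath : forall k, exists p : seq A,
      walk tl hd (o k) (d k) p && all (fun a => a \notin A1) p)
  (w : tolled A1 -> R) (hw : forall i, 0 <= w i) :
  strongly_bilevel_feasible tl hd c o d w ->
  exists W : K -> tolled A1 -> R,
    bilevel_feasible_decomposition tl hd c o d w W /\
    forall W' : K -> tolled A1 -> R,
      bilevel_feasible_decomposition tl hd c o d w W' ->
      forall k i, W' k i = W k i.
Proof.
move=> [F [[HFsub [_ HFface]] [[p0 Hp0] [HFw Hnd]]]].
have Hp0w := HFw _ Hp0.
have Hp0e := HFsub _ Hp0; rewrite /epi_g /= Hp0w in Hp0e.
have Hfin : gtot tl hd c o d w \is a fin_num.
  rewrite ge0_fin_numE ?gtot_ge0 //; exact: (le_lt_trans Hp0e (ltry _)).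
set g := fine (gtot tl hd c o d w).
have Hg : gtot tl hd c o d w = g%:E by rewrite /g fineK.
have HFg : F (w, g).
  have Hgs : g <= p0.2 by rewrite -lee_fin -Hg.
  case: (eqVneq g p0.2) => [Egs|Ngs].
    by rewrite Egs -Hp0w -surjective_pairing.
  have Hlt : g < p0.2 by rewrite lt_neqAle Ngs Hgs.
  have Hq1 : epi_g tl hd c o d (w, g) by rewrite /epi_g /= Hg.
  have Hq2 : epi_g tl hd c o d (w, 2 * p0.2 - g).
    by rewrite /epi_g /= Hg lee_fin; lra.
  have Hmid : cvx (1/2) (w, g) (w, 2 * p0.2 - g) = p0.
    rewrite /cvx /= [p0]surjective_pairing Hp0w /=; congr pair.
      by apply: funext => j; lra.
    lra.
  have Hl := half_in R.
  have Fm : F (cvx (1/2) (w, g) (w, 2 * p0.2 - g)) by rewrite Hmid.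
  have [HF1 _] := HFface _ _ (1/2) Hq1 Hq2 Hl Fm.
  exfalso; apply: Hnd.
  exists 1%N, (fun _ => (p0.2 - g)^-1), (fun _ => p0), (fun _ => (w, g)).
  split; first by move=> _; split.
  split.
    by move=> j; rewrite big_ord1 Hp0w /= subrr mulr0.
  rewrite big_ord1 /= mulVf //; by rewrite subr_eq0 eq_sym.
have Huniq : forall W W', bilevel_feasible_decomposition tl hd c o d w W ->
    bilevel_feasible_decomposition tl hd c o d w W' -> forall k i, W' k i = W k i.
  move=> W W' [HW0 [HWs HWg]] [HW0' [HWs' HWg']] k i.
  have Hfin_k : forall (W : K -> tolled A1 -> R), gtot tl hd c o d w = (\sum_k gk tl hd c (o k) (d k) (W k))%E ->
      forall j, gk tl hd c (o j) (d j) (W j) = (fine (gk tl hd c (o j) (d j) (W j)))%:E.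
    move=> U HU j; rewrite fineK // ge0_fin_numE ?gk_ge0 //.
    apply: (@le_lt_trans _ _ (g%:E)); last exact: ltry.
    rewrite -Hg HU (bigD1 j) //= leeDl //; apply: sume_ge0 => j' _; exact: gk_ge0.
  set gr := fun j => fine (gk tl hd c (o j) (d j) (W j)).
  set gr' := fun j => fine (gk tl hd c (o j) (d j) (W' j)).
  have Egr : \sum_j gr j = g.
    apply: EFin_inj; rewrite -sumEFin -Hg HWg; apply: eq_bigr => j _; rewrite /gr -Hfin_k //.
  have Egr' : \sum_j gr' j = g.
    apply: EFin_inj; rewrite -sumEFin -Hg HWg'; apply: eq_bigr => j _; rewrite /gr' -Hfin_k //.
  pose delta := fun i => W' k i - W k i.
  pose U := fun j => if j == k then W' k else W j.
  pose U' := fun j => if j == k then W k else W' j.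
  pose a := \sum_j (if j == k then gr' k else gr j).
  pose b := \sum_j (if j == k then gr k else gr' j).
  have HU : forall i, \sum_j U j i = w i + delta i.
    move=> i'; rewrite -HWs (bigD1 k) //= [in RHS](bigD1 k) //= /U eqxx /delta.
    rewrite (eq_bigr (fun j => W j i')); last by move=> j /negbTE ->.
    lra.
  have HU' : forall i, \sum_j U' j i = w i - delta i.
    move=> i'; rewrite -HWs' (bigD1 k) //= [in RHS](bigD1 k) //= /U' eqxx /delta.
    rewrite (eq_bigr (fun j => W' j i')); last by move=> j /negbTE ->.
    lra.
  have Hp : epi_g tl hd c o d ((fun i => w i + delta i), a).
    rewrite /epi_g /=; apply: le_trans (gtot_le_sum _ _ _ _ _ HU) _.
    rewrite /a -sumEFin le_eqVlt; apply/orP; left; apply/eqP; apply: eq_bigr => j _.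
    rewrite /U; case: eqP => [->|_]; [rewrite /gr' -Hfin_k|rewrite /gr -Hfin_k] => //.
  have Hq : epi_g tl hd c o d ((fun i => w i - delta i), b).
    rewrite /epi_g /=; apply: le_trans (gtot_le_sum _ _ _ _ _ HU') _.
    rewrite /b -sumEFin le_eqVlt; apply/orP; left; apply/eqP; apply: eq_bigr => j _.
    rewrite /U'; case: eqP => [->|_]; [rewrite /gr -Hfin_k|rewrite /gr' -Hfin_k] => //.
  have Hab : a + b = g + g.
    rewrite -{1}Egr -Egr' -!big_split /=; apply: eq_bigr => j _.
    by case: eqP => [->|_]; rewrite // addrC.
  have Hmid : cvx (1/2) ((fun i => w i + delta i), a) ((fun i => w i - delta i), b) = (w, g).
    rewrite /cvx /=; congr pair.
      by apply: funext => j; field.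
    lra.
  have Hl := half_in R.
  have Fm : F (cvx (1/2) ((fun i => w i + delta i), a) ((fun i => w i - delta i), b)) by rewrite Hmid.
  have [HF1 _] := HFface _ _ (1/2) Hp Hq Hl Fm.
  have := HFw _ HF1 => /= /(congr1 (fun f => f i)) /=.
  rewrite /delta; lra.
have [y [Hy1 Hy2 Hy3]] := exist_opt hpath hw Hg.
case: (pselect (exists k0 : K, True)) => [[k0 _]|Hne].
  pose W := fun k i => y k (val i) + (k == k0)%:R * (w i - \sum_k' y k' (val i)).
  have HW : bilevel_feasible_decomposition tl hd c o d w W.
    have Hs : forall i, \sum_k W k i = w i.
      move=> i; rewrite /W big_split /= (sum_delta k0 (fun _ => w i - \sum_k' y k' (val i))).
      lra.
    split.
      move=> k i; apply: addr_ge0; first exact: (Hy1 k).2.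
      by apply: mulr_ge0; rewrite ?ler0n // subr_ge0.
    split; first exact: Hs.
    apply/le_anti/andP; split; first exact: gtot_le_sum.
    rewrite Hg; apply: le_trans (_ : (\sum_k (\sum_a c a * y k a)%:E <= _)%E).
      apply: lee_sum => k _; apply: gk_le => // i.
      rewrite /W lerDl; apply: mulr_ge0; rewrite ?ler0n // subr_ge0 //.
    by rewrite sumEFin lee_fin.
  by exists W; split => // W' HW'; apply: Huniq.
have Hemp : forall (F' : K -> R), \sum_k F' k = 0.
  by move=> F'; apply: big1 => k _; exfalso; apply: Hne; exists k.
have Hemp' : forall (F' : K -> \bar R), (\sum_k F' k)%E = 0%E.
  by move=> F'; apply: big1 => k _; exfalso; apply: Hne; exists k.
have Hw0 : forall i, w i = 0.
  move=> i; apply/le_anti/andP; split; last exact: hw.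
  rewrite leNgt; apply/negP => Hwi.
  pose M := (g + 1) / w i.
  have := gtot_ge tl hd c o d w (fun j => (j == i)%:R * - M).
  rewrite Hg /ftot Hemp' /vdot.
  under eq_bigr do rewrite -mulrA.
  rewrite (sum_delta i (fun j => - M * w j)) sub0e -EFinN lee_fin mulNr opprK /M.
  rewrite mulfVK ?gt_eqF //; lra.
pose W := fun (k : K) (i : tolled A1) => (0 : R).
have HW : bilevel_feasible_decomposition tl hd c o d w W.
  split => //; split; first by move=> i; rewrite Hemp Hw0.
  apply/le_anti/andP; split.
    by apply: gtot_le_sum => i; rewrite Hemp Hw0.
  by rewrite Hemp' gtot_ge0.
by exists W; split => // W' HW'; apply: Huniq.
Qed.
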